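(* Let $l$ be a prime and $n\ge 2$. For $1\le r\le n$ let $\alpha_r\in S_{l^n}$ be the product of the $l^{r-1}$ disjoint $l$-cycles $(j,\ j+l^{r-1},\ j+2l^{r-1},\dots,\ j+(l-1)l^{r-1})$, $j=1,\dots,l^{r-1}$ (so $\alpha_1=(1\,2\,\cdots\,l)$), and let $\mathcal{G}_n=\langle\alpha_1,\dots,\alpha_n\rangle$, an $l$-Sylow subgroup of $S_{l^n}$ isomorphic to the $n$-fold iterated wreath product $(\cdots((C_l\wr C_l)\wr C_l)\cdots)\wr C_l$. Let $\mathcal{H}=\langle\alpha_1\rangle$. If $n\ge 3$, or if $n=2$ and $l\ge 5$, then every metacyclic subgroup $D\le\mathcal{G}_n$ satisfies $S(D,\mathcal{H})>1$ (double cosets in $\mathcal{G}_n$).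
   Context: A group is metacyclic if it has a cyclic normal subgroup with cyclic quotient. For subgroups $A,B$ of a finite group $\mathcal{G}$, a double coset $AxB$ is split if $|AxB|=|A||B|$ (equivalently $x^{-1}Ax\cap B=1$), and $S(A,B)$ is the number of distinct split double cosets. *)

(* Defs.v *)
From HB Require Import structures.
From mathcomp Require Import all_boot all_order all_fingroup all_solvable.
Set Implicit Arguments. Unset Strict Implicit. Unset Printing Implicit Defensive.


(* 0-indexed version of alpha_r on {0, ..., l^n - 1}: the point
   j + k*l^(r-1) (j < l^(r-1), k < l) is sent to j + ((k+1) mod l)*l^(r-1);
   points >= l^r are fixed. *)
Definition alpha_fun (l r i : nat) : nat :=
  if [&& 0 < l, 0 < r & i < l ^ r] then
    i %% l ^ r.-1 + (i %/ l ^ r.-1).+1 %% l * l ^ r.-1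
  else i.


Lemma alpha_fun_lt l r i : 0 < l -> 0 < r -> i < l ^ r -> alpha_fun l r i < l ^ r.
Proof.
move=> l0 r0 ir; rewrite /alpha_fun l0 r0 ir /=.
have p0 : 0 < l ^ r.-1 by rewrite expn_gt0 l0.
have -> : l ^ r = (l.-1 * l ^ r.-1 + l ^ r.-1).
  by rewrite -{2}[l ^ r.-1]mul1n -mulnDl addn1 prednK // -expnS prednK.
rewrite addnC -addnS; apply: leq_add; last exact: ltn_pmod.
by rewrite leq_mul2r -ltnS prednK // ltn_pmod // orbT.
Qed.

Lemma alpha_fun_small l r i : 0 < l -> 0 < r -> i < l ^ r ->
  (alpha_fun l r i %% l ^ r.-1 = i %% l ^ r.-1) /\
  (alpha_fun l r i %/ l ^ r.-1 = (i %/ l ^ r.-1).+1 %% l).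
Proof.
move=> l0 r0 ir; rewrite /alpha_fun l0 r0 ir /=.
have p0 : 0 < l ^ r.-1 by rewrite expn_gt0 l0.
split; first by rewrite addnC modnMDl modn_mod.
by rewrite addnC (divnMDl _ (i %% l ^ r.-1) p0) (divn_small (ltn_pmod _ p0)) addn0.
Qed.

Lemma alpha_fun_inj l r n (i j : 'I_(l ^ n)) : r <= n ->
  alpha_fun l r i = alpha_fun l r j -> i = j.
Proof.
move=> rn.
have key : forall a b : nat, 0 < l -> 0 < r -> a < l ^ r -> b < l ^ r ->
    alpha_fun l r a = alpha_fun l r b -> a = b.
  move=> a b l0 r0 ar br e.
  have [A1 A2] := alpha_fun_small l0 r0 ar.
  have [B1 B2] := alpha_fun_small l0 r0 br.
  have p0 : 0 < l ^ r.-1 by rewrite expn_gt0 l0.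
  have hr : l ^ r = l * l ^ r.-1 by rewrite -expnS prednK.
  have qa : a %/ l ^ r.-1 < l by rewrite ltn_divLR // -hr.
  have qb : b %/ l ^ r.-1 < l by rewrite ltn_divLR // -hr.
  have em : a %% l ^ r.-1 = b %% l ^ r.-1 by rewrite -A1 -B1 e.
  have eq : a %/ l ^ r.-1 = b %/ l ^ r.-1.
    have : (a %/ l ^ r.-1) + 1 = (b %/ l ^ r.-1) + 1 %[mod l].
      by rewrite !addn1 -A2 -B2 e.
    by move/eqP; rewrite eqn_modDr !modn_small // => /eqP.
  by rewrite (divn_eq a (l ^ r.-1)) (divn_eq b (l ^ r.-1)) em eq.
case: (boolP [&& 0 < l, 0 < r & i < l ^ r]) => hi;
case: (boolP [&& 0 < l, 0 < r & j < l ^ r]) => hj.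
- case/and3P: hi => l0 r0 ir; case/and3P: hj => _ _ jr.
  by move=> e; apply/val_inj/(key _ _ l0 r0 ir jr e).
- case/and3P: hi => l0 r0 ir; rewrite {2}/alpha_fun (negbTE hj) => e.
  move: (alpha_fun_lt l0 r0 ir); rewrite e => jr; rewrite l0 r0 jr in hj; done.
- case/and3P: hj => l0 r0 jr; rewrite {1}/alpha_fun (negbTE hi) => e.
  move: (alpha_fun_lt l0 r0 jr); rewrite -e => ir; rewrite l0 r0 ir in hi; done.
- by rewrite /alpha_fun (negbTE hi) (negbTE hj) => /val_inj.
Qed.

Lemma alpha_fun_bound l r n (i : 'I_(l ^ n)) : r <= n -> alpha_fun l r i < l ^ n.
Proof.
move=> rn; case: (boolP [&& 0 < l, 0 < r & i < l ^ r]) => hi.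
  case/and3P: hi => l0 r0 ir; apply: (leq_trans (alpha_fun_lt l0 r0 ir)).
  by rewrite leq_pexp2l.
by rewrite /alpha_fun (negbTE hi).
Qed.

Definition alpha_ffun l n (r : 'I_n) : {ffun 'I_(l ^ n) -> 'I_(l ^ n)} :=
  [ffun i => Ordinal (@alpha_fun_bound l r.+1 n i (ltn_ord r))].

Lemma alpha_ffun_inj l n (r : 'I_n) : injective (alpha_ffun l r).
Proof.
move=> i j; rewrite !ffunE => /(congr1 val) /= e.
exact: (alpha_fun_inj (ltn_ord r) e).
Qed.

Local Open Scope group_scope.

(* alpha l n r  is  alpha_{r+1}  of the paper, for r : 'I_n *)
Definition alpha l n (r : 'I_n) : {perm 'I_(l ^ n)} := perm (@alpha_ffun_inj l n r).

Definition Gn l n : {group {perm 'I_(l ^ n)}} :=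
  <<[set alpha l r | r : 'I_n]>>%G.

Definition Hgrp l n (hn : 0 < n) : {group {perm 'I_(l ^ n)}} :=
  <[alpha l (Ordinal hn)]>%G.

Definition dcoset (gT : finGroupType) (A B : {set gT}) (x : gT) : {set gT} :=
  (A :* x) * B.

Definition Ssplit (gT : finGroupType) (G A B : {set gT}) : nat :=
  #|[set dcoset A B x | x in G & #|dcoset A B x| == (#|A| * #|B|)%N]|.

(* Main.v *)
Require Import Defs.
From mathcomp Require Import all_boot all_order all_fingroup all_solvable.
Set Implicit Arguments. Unset Strict Implicit. Unset Printing Implicit Defensive.
Local Open Scope group_scope.

Definition rot (l N j : nat) (s : {perm 'I_N}) :=
  forall q : 'I_N, val (s q) = if q %/ l == j then j * l + (q %% l).+1 %% l else val q.

Lemma blk_small l j x : 0 < l -> x < l -> (j * l + x) %/ l = j.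
Proof. by move=> l0 xl; rewrite divnMDl // divn_small // addn0. Qed.

Lemma mod_small' l j x : x < l -> (j * l + x) %% l = x.
Proof. by move=> xl; rewrite modnMDl modn_small. Qed.

Lemma rot_fix l N j (s : {perm 'I_N}) (q : 'I_N) : rot l j s -> q %/ l != j -> s q = q.
Proof. by move=> hs hq; apply: val_inj; rewrite hs (negbTE hq). Qed.

Lemma rot_blk l N j (s : {perm 'I_N}) (q : 'I_N) : 0 < l -> rot l j s -> (s q) %/ l = q %/ l.
Proof.
move=> l0 hs; rewrite hs; case: eqP => // <-.
by rewrite blk_small // ltn_pmod.
Qed.

Lemma rot_expg l N j (s : {perm 'I_N}) : 0 < l -> rot l j s -> forall a (q : 'I_N),
  val ((s ^+ a) q) = if q %/ l == j then j * l + (q %% l + a) %% l else val q.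
Proof.
move=> l0 hs; elim=> [|a IH] q.
  rewrite expg0 perm1 addn0; case: eqP => // <-.
  by rewrite modn_mod -divn_eq.
rewrite expgSr permM hs IH; case: (eqVneq (q %/ l) j) => qj.
  rewrite blk_small ?ltn_pmod // eqxx mod_small' ?ltn_pmod //.
  by rewrite -addn1 modnDml -addnA addn1.
by rewrite IH (negbTE qj).
Qed.

Lemma rot_order l N j (s : {perm 'I_N}) : 0 < l -> rot l j s -> s ^+ l = 1.
Proof.
move=> l0 hs; apply/permP => q; rewrite perm1; apply: val_inj.
rewrite (rot_expg l0 hs); case: eqP => // <-.
by rewrite modnDr modn_mod -divn_eq.
Qed.

Lemma rot_commute l N i j (s t : {perm 'I_N}) : 0 < l -> i != j ->
  rot l i s -> rot l j t -> commute s t.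
Proof.
move=> l0 ij hs ht; apply/permP => q; rewrite !permM.
case: (eqVneq (q %/ l) i) => qi.
  have tq : t q = q by apply: rot_fix ht _; rewrite qi.
  by rewrite tq; apply: rot_fix ht _; rewrite (rot_blk _ l0 hs) qi.
case: (eqVneq (q %/ l) j) => qj.
  have sq : s q = q by apply: rot_fix hs _; rewrite qj eq_sym.
  by rewrite sq; symmetry; apply: rot_fix hs _; rewrite (rot_blk _ l0 ht) qj eq_sym.
by rewrite (rot_fix hs qi) (rot_fix ht qj) (rot_fix hs qi).
Qed.

Lemma conj_rot l N j (a g : {perm 'I_N}) : 0 < l -> l <= N -> rot l 0 a ->
  (forall r : 'I_N, r < l -> val (g r) = j * l + r) -> rot l j (a ^ g).
Proof.
move=> l0 lN ha hg q; rewrite conjgE !permM.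
set p := (g^-1) q; have qE : q = g p by rewrite /p permKV.
case: (ltnP p l) => hp.
  have hap : val (a p) = (p.+1) %% l.
    by rewrite ha (divn_small hp) eqxx mul0n add0n (modn_small hp).
  rewrite hg; last by rewrite hap ltn_pmod.
  by rewrite hap qE hg // blk_small // eqxx mod_small'.
have hap : a p = p by apply: rot_fix ha _; rewrite -lt0n divn_gt0.
rewrite hap -qE; case: ifP => // /eqP hq; exfalso.
have rl : q %% l < N by apply: leq_trans (ltn_pmod _ l0) lN.
have : g (Ordinal rl) = q.
  by apply: val_inj; rewrite hg /= ?ltn_pmod // -hq -divn_eq.
move=> e; have E := perm_inj (etrans e qE).
by move: hp; rewrite -E /= leqNgt ltn_pmod.
Qed.

Lemma alphaE l n (r : 'I_n) (i : 'I_(l ^ n)) : 0 < l -> i < l ^ r.+1 ->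
  val (alpha l r i) = i %% l ^ r + (i %/ l ^ r).+1 %% l * l ^ r.
Proof. by rewrite /alpha permE ffunE /= /alpha_fun => -> ->. Qed.

Lemma alphaE' l n (r : 'I_n) (i : 'I_(l ^ n)) : ~~ (i < l ^ r.+1) ->
  val (alpha l r i) = i.
Proof. by rewrite /alpha permE ffunE /= /alpha_fun => /negbTE ->; rewrite !andbF. Qed.

Lemma alpha_rot0 l n (hn : 0 < n) : 0 < l -> rot l 0 (alpha l (Ordinal hn)).
Proof.
move=> l0 q; case: (ltnP q l) => ql.
  rewrite alphaE /= ?expn1 // expn0 modn1 divn1 muln1 add0n.
  by rewrite (divn_small ql) eqxx mul0n add0n (modn_small ql).
rewrite alphaE' /= ?expn1 -?leqNgt //.
by rewrite -[_ == 0]negbK -lt0n divn_gt0 // ql.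
Qed.

Lemma alpha_in l n (r : 'I_n) : alpha l r \in Gn l n.
Proof. by apply/mem_gen/imsetP; exists r. Qed.

Lemma alpha2E l n (h : 1 < n) (i : 'I_(l ^ n)) : 1 < l -> i < l * l ->
  (i %/ l).+1 < l -> val (alpha l (Ordinal h) i) = i + l.
Proof.
move=> l1 il hq; have l0 : 0 < l by apply: ltnW.
rewrite alphaE /= ?expn1 ?mulnn //.
by rewrite (modn_small hq) mulSnr addnA (addnC (i %% l)) -divn_eq.
Qed.

Lemma alpha2X l n (h : 1 < n) (r : 'I_(l ^ n)) k : 1 < l -> r < l -> k < l ->
  val ((alpha l (Ordinal h) ^+ k) r) = r + k * l.
Proof.
move=> l1 rl; have l0 : 0 < l by apply: ltnW.
elim: k => [|k IH] kl; first by rewrite expg0 perm1 mul0n addn0.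
have kl' : k < l by apply: ltnW.
rewrite expgSr permM alpha2E // IH //.
- by rewrite mulSnr addnA.
- rewrite (leq_trans (_ : _ < l + k * l)) ?ltn_add2r //.
  by rewrite -mulSn leq_mul2r ltnW ?orbT.
- by rewrite addnC blk_small.
Qed.

Lemma alpha3E l n (h : 2 < n) (i : 'I_(l ^ n)) : 1 < l -> i < l * l ->
  val (alpha l (Ordinal h) i) = i + l * l.
Proof.
move=> l1 il; have l0 : 0 < l by apply: ltnW.
have il3 : i < l ^ 2.+1 by apply: (leq_trans il); rewrite mulnn leq_pexp2l.
rewrite alphaE //=.
by rewrite mulnn in il; rewrite (modn_small il) (divn_small il) (modn_small l1) mul1n mulnn.
Qed.

Lemma blocks l n (hl : prime l) (hn : 2 <= n) (hcase : 3 <= n \/ (n = 2 /\ 5 <= l)) :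
  exists (j1 j2 j3 : nat) (g1 g2 g3 : {perm 'I_(l ^ n)}),
   [/\ [&& j1 != 0, j2 != 0, j3 != 0, j1 != j2, j1 != j3 & j2 != j3],
       [&& g1 \in Gn l n, g2 \in Gn l n & g3 \in Gn l n] &
       (forall r : 'I_(l ^ n), r < l ->
          [/\ val (g1 r) = j1 * l + r, val (g2 r) = j2 * l + r & val (g3 r) = j3 * l + r])].
Proof.
have l1 := prime_gt1 hl; have l0 : 0 < l by apply: ltnW.
case: hcase => [h3 | [h2 h5]].
  exists 1%N, l, l.+1, (alpha l (Ordinal hn)), (alpha l (Ordinal h3)),
    (alpha l (Ordinal hn) * alpha l (Ordinal h3)).
  split.
  - rewrite -!lt0n l0 (ltn_eqF l1) (ltn_eqF (ltnSn l)) eqSS eq_sym -lt0n l0 //=.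
  - by rewrite !alpha_in groupM ?alpha_in.
  move=> r rl.
  have rll : r < l * l by apply: (leq_trans rl); rewrite leq_pmulr.
  have a2 : val (alpha l (Ordinal hn) r) = r + l.
    by rewrite alpha2E // divn_small.
  split.
  - by rewrite a2 mul1n addnC.
  - by rewrite alpha3E // addnC.
  rewrite permM alpha3E ?a2 //.
    by rewrite mulSn [RHS]addnC addnA.
  rewrite (leq_trans (_ : _ < l + l)) ?ltn_add2r //.
  by rewrite addnn -mul2n leq_mul2r l1 orbT.
have l3 : 3 < l by apply: leq_trans h5.
exists 1%N, 2, 3, (alpha l (Ordinal hn) ^+ 1), (alpha l (Ordinal hn) ^+ 2),
  (alpha l (Ordinal hn) ^+ 3).
split => //.
- by rewrite !groupX ?alpha_in.
move=> r rl; rewrite !alpha2X // ?(leq_trans _ l3) //.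
by split; rewrite addnC mulnC.
Qed.

Lemma commuteMM (gT : finGroupType) (x1 y1 x2 y2 : gT) :
  commute x1 x2 -> commute x1 y2 -> commute y1 x2 -> commute y1 y2 ->
  commute (x1 * y1) (x2 * y2).
Proof.
move=> a b c d; apply: commute_sym; apply: commuteM; apply: commute_sym;
by apply: commuteM.
Qed.

Lemma commuteJg (gT : finGroupType) (x y z : gT) : commute x y -> commute (x ^ z) (y ^ z).
Proof. by rewrite /commute -!conjMg => ->. Qed.

Lemma rot_blkX l N j (s : {perm 'I_N}) k (q : 'I_N) : 0 < l -> rot l j s ->
  ((s ^+ k) q) %/ l = q %/ l.
Proof.
move=> l0 hs; rewrite (rot_expg l0 hs); case: eqP => // <-.
by rewrite blk_small // ltn_pmod.
Qed.

Lemma agreeX l N j (u s : {perm 'I_N}) : 0 < l -> rot l j s ->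
  (forall q : 'I_N, q %/ l != 0 -> u q = s q) ->
  forall k (q : 'I_N), q %/ l != 0 -> (u ^+ k) q = (s ^+ k) q.
Proof.
move=> l0 hs hu; elim=> [|k IH] q hq; first by rewrite !expg0.
by rewrite !expgSr !permM IH // hu // (rot_blkX _ _ l0 hs).
Qed.

Lemma evalX l N j (u s : {perm 'I_N}) k (q : 'I_N) : 0 < l -> rot l j s ->
  (forall q : 'I_N, q %/ l != 0 -> u q = s q) -> q %/ l != 0 ->
  val ((u ^+ k) q) = if q %/ l == j then j * l + (q %% l + k) %% l else val q.
Proof. by move=> l0 hs hu hq; rewrite (agreeX l0 hs hu) // (rot_expg l0 hs). Qed.

Lemma eval3 l N j1 j2 j3 (s1 s2 s3 u1 u2 u3 : {perm 'I_N}) (P1 P2 P3 : 'I_N) :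
  0 < l -> rot l j1 s1 -> rot l j2 s2 -> rot l j3 s3 ->
  (forall q : 'I_N, q %/ l != 0 -> u1 q = s1 q) ->
  (forall q : 'I_N, q %/ l != 0 -> u2 q = s2 q) ->
  (forall q : 'I_N, q %/ l != 0 -> u3 q = s3 q) ->
  [&& j1 != 0, j2 != 0, j3 != 0, j1 != j2, j1 != j3 & j2 != j3] ->
  val P1 = (j1 * l)%N -> val P2 = (j2 * l)%N -> val P3 = (j3 * l)%N ->
  forall a b c, a < l -> b < l -> c < l ->
  [/\ val ((u1 ^+ a * u2 ^+ b * u3 ^+ c) P1) = j1 * l + a,
      val ((u1 ^+ a * u2 ^+ b * u3 ^+ c) P2) = j2 * l + b &
      val ((u1 ^+ a * u2 ^+ b * u3 ^+ c) P3) = j3 * l + c].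
Proof.
move=> l0 r1 r2 r3 h1 h2 h3 /and5P [n1 n2 n3 n12 /andP [n13 n23]] e1 e2 e3 a b c al bl cl.
have key : forall (q : 'I_N) j x, val q = j * l + x -> x < l -> j != 0 ->
   q %/ l = j /\ q %% l = x.
  by move=> q j x -> xl _; rewrite blk_small // mod_small'.
have step : forall (u s : {perm 'I_N}) jj k (q : 'I_N) j x,
    rot l jj s -> (forall q : 'I_N, q %/ l != 0 -> u q = s q) ->
    val q = j * l + x -> x < l -> j != 0 ->
    val ((u ^+ k) q) = if j == jj then j * l + (x + k) %% l else j * l + x.
  move=> u s jj k q j x hs hu eq xl j0; have [bq mq] := key q j x eq xl j0.
  rewrite (evalX _ l0 hs hu) ?bq // mq eq; by case: eqP => // ->.
have E1 : forall (q : 'I_N) j x, val q = j * l + x -> x < l -> j != 0 ->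
    val (((u1 ^+ a) * (u2 ^+ b) * (u3 ^+ c)) q) =
    j * l + (if j == j3 then (((if j == j2 then (((if j == j1 then (x + a) %% l else x) + b) %% l)
       else (if j == j1 then (x + a) %% l else x)) + c) %% l) else
       (if j == j2 then (((if j == j1 then (x + a) %% l else x) + b) %% l)
       else (if j == j1 then (x + a) %% l else x))).
  move=> q j x eq xl j0; rewrite !permM.
  have q1 := step _ _ _ a _ _ _ r1 h1 eq xl j0.
  have y1 : (if j == j1 then (x + a) %% l else x) < l by case: ifP => // _; rewrite ltn_pmod.
  have q1' : val ((u1 ^+ a) q) = j * l + (if j == j1 then (x + a) %% l else x).
    by rewrite q1; case: ifP.
  have q2 := step _ _ _ b _ _ _ r2 h2 q1' y1 j0.
  set z := (if j == j2 then _ else _).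
  have y2 : z < l by rewrite /z; case: ifP => // _; rewrite ltn_pmod.
  have q2' : val ((u2 ^+ b) ((u1 ^+ a) q)) = j * l + z.
    by rewrite q2 /z; case: ifP.
  have q3 := step _ _ _ c _ _ _ r3 h3 q2' y2 j0.
  by rewrite q3; case: ifP.
have P1' : val P1 = j1 * l + 0 by rewrite addn0.
have P2' : val P2 = j2 * l + 0 by rewrite addn0.
have P3' : val P3 = j3 * l + 0 by rewrite addn0.
split.
- by rewrite (E1 _ _ _ P1' l0 n1) (negbTE n13) (negbTE n12) eqxx add0n modn_small.
- by rewrite (E1 _ _ _ P2' l0 n2) (negbTE n23) eqxx [j2 == j1]eq_sym (negbTE n12) add0n modn_small.
- by rewrite (E1 _ _ _ P3' l0 n3) eqxx [j3 == j1]eq_sym (negbTE n13) [j3 == j2]eq_sym (negbTE n23) add0n modn_small.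
Qed.
Lemma core (gT : finGroupType) (M : {group gT}) (l : nat) (u1 u2 u3 : gT) :
  prime l -> metacyclic M -> u1 \in M -> u2 \in M -> u3 \in M ->
  commute u1 u2 -> commute u1 u3 -> commute u2 u3 ->
  u1 ^+ l = 1 -> u2 ^+ l = 1 -> u3 ^+ l = 1 ->
  (forall a b c a' b' c', a < l -> b < l -> c < l ->
     u1 ^+ a * u2 ^+ b * u3 ^+ c = u1 ^+ a' * u2 ^+ b' * u3 ^+ c' ->
     a' < l -> b' < l -> c' < l -> [/\ a = a', b = b' & c = c']) -> False.
Proof.
move=> pl mM M1 M2 M3 c12 c13 c23 e1 e2 e3 inj.
set A := [set u1; u2; u3].
have sAM : A \subset M by apply/subsetP => x; rewrite !inE => /orP[/orP[]|] /eqP ->.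
have ab : abelian A.
  apply/centsP => x; rewrite !inE => /orP[/orP[]|] /eqP -> y; rewrite !inE => /orP[/orP[]|] /eqP ->;
  first [ exact: commute_refl | done | exact: commute_sym ].
set E := <<A>>%G.
have expE : exponent E %| l.
  by rewrite /E /= abelian_exponent_gen //; apply/exponentP => x; rewrite !inE => /orP[/orP[]|] /eqP ->.
have mE : metacyclic E by apply: metacyclicS mM; rewrite gen_subG.
case/metacyclicP: mE => C [cC nCE cQ].
have l0 := prime_gt0 pl.
have h1 : #|C| <= l.
  rewrite -exponent_cyclic //; apply: dvdn_leq l0 _.
  exact: dvdn_trans (exponentS (normal_sub nCE)) expE.
have h2 : #|E / C| <= l.
  rewrite -exponent_cyclic //; apply: dvdn_leq l0 _.
  exact: dvdn_trans (exponent_quotient _ _) expE.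
have hE : #|E| <= l * l.
  rewrite -(Lagrange (normal_sub nCE)) -card_quotient ?normal_norm //.
  exact: leq_mul.
pose f (t : 'I_l * 'I_l * 'I_l) := u1 ^+ t.1.1 * u2 ^+ t.1.2 * u3 ^+ t.2.
have injf : injective f.
  move=> [[a b] c] [[a' b'] c']; rewrite /f /= => /inj.
  case/(_ (ltn_ord a) (ltn_ord b) (ltn_ord c) (ltn_ord a') (ltn_ord b') (ltn_ord c')).
  by move=> /val_inj -> /val_inj -> /val_inj ->.
have sub : f @: setT \subset E.
  apply/subsetP => x /imsetP [t _ ->]; rewrite /f.
  by rewrite !groupM ?groupX // mem_gen // !inE eqxx ?orbT.
have := subset_leq_card sub; rewrite card_imset // cardsT !card_prod !card_ord.
move=> h; have := leq_trans h hE.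
rewrite -[X in _ <= X]muln1 leq_pmul2l ?muln_gt0 ?l0 //.
by rewrite leqNgt prime_gt1.
Qed.

Lemma dcoset_card (gT : finGroupType) (D : {group gT}) (a x : gT) (l : nat) :
  prime l -> #[a] = l -> a \notin D :^ x ->
  #|dcoset D <[a]> x| = (#|D| * #|<[a]>|)%N.
Proof.
move=> pl oa nD; rewrite /dcoset.
have -> : D :* x = x *: (D :^ x) by rewrite conjsgE lcosetKV.
rewrite -mulgA card_lcoset.
rewrite -(cardJg D x) mul_cardG.
suff -> : #|D :^ x :&: <[a]>| = 1%N by rewrite muln1.
have : #|D :^ x :&: <[a]>| %| l.
  by rewrite -oa /order cardSg // subsetIr.
move=> hd; case/primeP: pl => _ /(_ _ hd) /orP [/eqP // | /eqP hl].
have e : #|D :^ x :&: <[a]>| = #|<[a]>| by rewrite hl -oa.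
have := subset_cardP e (subsetIr _ _) => /(_ a); rewrite cycle_id inE => /andP [].
by rewrite (negbTE nD).
Qed.

Lemma cyc_fix l N (a h : {perm 'I_N}) (q : 'I_N) : 0 < l -> rot l 0 a -> h \in <[a]> ->
  q %/ l != 0 -> h q = q.
Proof.
move=> l0 ha /cycleP [m ->] hq; apply: val_inj.
by rewrite (rot_expg l0 ha) (negbTE hq).
Qed.

Theorem mainTheorem15 (l n : nat) (hl : prime l) (hn : 2 <= n)
  (hcase : 3 <= n \/ (n = 2 /\ 5 <= l))
  (D : {group {perm 'I_(l ^ n)}}) (hDG : D \subset Gn l n) (hD : metacyclic D) :
  1 < Ssplit (Gn l n) D (Hgrp l (ltnW hn)).
Proof.
have l1 := prime_gt1 hl; have l0 : 0 < l by apply: ltnW.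
set G := Gn l n.
set a := alpha l (Ordinal (ltnW hn)).
have ha : rot l 0 a := alpha_rot0 (ltnW hn) l0.
have lN : l <= l ^ n by rewrite -{1}(expn1 l) leq_pexp2l // ltnW.
have N0 : 0 < l ^ n by apply: leq_trans lN.
set z : 'I_(l ^ n) := Ordinal N0.
have aG : a \in G := alpha_in _ _.
have oa : #[a] = l.
  have : #[a] %| l by rewrite order_dvdn (rot_order l0 ha).
  case/primeP: hl => _ h /h /orP [|/eqP //].
  rewrite order_eq1 => /eqP a1.
  have : val (a z) = 1%N.
    by rewrite ha /= div0n eqxx mul0n add0n mod0n modn_small.
  by rewrite a1 perm1.
have [j1 [j2 [j3 [g1 [g2 [g3 [hj hg hgr]]]]]]] := blocks hl hn hcase.
have hj' := hj.
case/and5P: hj' => n1 n2 n3 n12 /andP [n13 n23].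
case/and3P: hg => g1G g2G g3G.
set c1 := a ^ g1; set c2 := a ^ g2; set c3 := a ^ g3.
have r1 : rot l j1 c1 by apply: conj_rot => // r rl; case: (hgr r rl).
have r2 : rot l j2 c2 by apply: conj_rot => // r rl; case: (hgr r rl).
have r3 : rot l j3 c3 by apply: conj_rot => // r rl; case: (hgr r rl).
have c1G : c1 \in G by rewrite groupJ.
have c2G : c2 \in G by rewrite groupJ.
have c3G : c3 \in G by rewrite groupJ.
have ca1 : commute c1 a by apply: (rot_commute l0 n1 r1 ha).
have ca2 : commute c2 a by apply: (rot_commute l0 n2 r2 ha).
have ca3 : commute c3 a by apply: (rot_commute l0 n3 r3 ha).
have c12 : commute c1 c2 by apply: (rot_commute l0 n12 r1 r2).
have c13 : commute c1 c3 by apply: (rot_commute l0 n13 r1 r3).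
have c23 : commute c2 c3 by apply: (rot_commute l0 n23 r2 r3).
have cycV : forall h, h \in <[a]> -> h^-1 \in <[a]> by move=> h; rewrite groupV.
have cch : forall c h, commute c a -> h \in <[a]> -> commute c h^-1.
  by move=> c h ca /cycV /cycleP [m ->]; apply: commuteX.
have hh : forall h h', h \in <[a]> -> h' \in <[a]> -> commute h^-1 h'^-1.
  by move=> h h' /cycV /cycleP [m ->] /cycV /cycleP [m' ->]; apply: commuteX2.
have hl1 : forall h, h \in <[a]> -> h^-1 ^+ l = 1.
  by move=> h /cycV hV; move: (expg_cardG hV); rewrite -[#|<[a]>|]/#[a] oa.
have agr : forall c h : {perm 'I_(l ^ n)}, h \in <[a]> -> (forall q : 'I_(l ^ n), (c q) %/ l = q %/ l) ->
    forall q : 'I_(l ^ n), q %/ l != 0 -> (c * h^-1) q = c q.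
  move=> c h /cycV hV cb q hq; rewrite permM; apply: (cyc_fix l0 ha hV).
  by rewrite cb.
have P1 : val (g1 z) = (j1 * l)%N by case: (hgr z l0) => -> _ _; rewrite addn0.
have P2 : val (g2 z) = (j2 * l)%N by case: (hgr z l0) => _ -> _; rewrite addn0.
have P3 : val (g3 z) = (j3 * l)%N by case: (hgr z l0) => _ _ ->; rewrite addn0.
have o1 : c1 ^+ l = 1 := rot_order l0 r1.
have o2 : c2 ^+ l = 1 := rot_order l0 r2.
have o3 : c3 ^+ l = 1 := rot_order l0 r3.
have fam : forall h1 h2 h3 y, h1 \in <[a]> -> h2 \in <[a]> -> h3 \in <[a]> ->
    (c1 * h1^-1) ^ y \in D -> (c2 * h2^-1) ^ y \in D -> (c3 * h3^-1) ^ y \in D -> False.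
  move=> h1 h2 h3 y H1 H2 H3 D1 D2 D3.
  have ev := eval3 l0 r1 r2 r3 (agr _ _ H1 (fun q => rot_blk q l0 r1))
     (agr _ _ H2 (fun q => rot_blk q l0 r2)) (agr _ _ H3 (fun q => rot_blk q l0 r3)) hj P1 P2 P3.
  apply: (core hl hD D1 D2 D3).
  - by apply: commuteJg; apply: commuteMM => //; [apply: cch | apply: commute_sym; apply: cch | apply: hh].
  - by apply: commuteJg; apply: commuteMM => //; [apply: cch | apply: commute_sym; apply: cch | apply: hh].
  - by apply: commuteJg; apply: commuteMM => //; [apply: cch | apply: commute_sym; apply: cch | apply: hh].
  - have ee : c1 ^+ l * h1^-1 ^+ l = 1 by rewrite o1 hl1 // mulg1.
    rewrite -conjXg expgMn; last by apply: cch.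
    by move: ee => /(congr1 (conjg^~ y)); rewrite conj1g.
  - have ee : c2 ^+ l * h2^-1 ^+ l = 1 by rewrite o2 hl1 // mulg1.
    rewrite -conjXg expgMn; last by apply: cch.
    by move: ee => /(congr1 (conjg^~ y)); rewrite conj1g.
  - have ee : c3 ^+ l * h3^-1 ^+ l = 1 by rewrite o3 hl1 // mulg1.
    rewrite -conjXg expgMn; last by apply: cch.
    by move: ee => /(congr1 (conjg^~ y)); rewrite conj1g.
  move=> x1 x2 x3 x1' x2' x3' lx1 lx2 lx3; rewrite -!conjXg -!conjMg => /conjg_inj e lx1' lx2' lx3'.
  have [A1 A2 A3] := ev _ _ _ lx1 lx2 lx3.
  have [B1 B2 B3] := ev _ _ _ lx1' lx2' lx3'.
  rewrite e in A1 A2 A3.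
  split; apply/eqP.
  - by rewrite -(eqn_add2l (j1 * l)) -A1 -B1.
  - by rewrite -(eqn_add2l (j2 * l)) -A2 -B2.
  - by rewrite -(eqn_add2l (j3 * l)) -A3 -B3.
have [g gG ngD] : exists2 g, g \in G & a ^ g \notin D.
  case: (boolP (c1 \in D)) => d1; last by exists g1.
  case: (boolP (c2 \in D)) => d2; last by exists g2.
  case: (boolP (c3 \in D)) => d3; last by exists g3.
  exfalso; apply: (fam 1 1 1 1); rewrite ?group1 // invg1 mulg1 conjg1 //.
set x := g^-1.
have xG : x \in G by rewrite groupV.
have nx : a \notin D :^ x by rewrite -[a in a \in _](conjgK g) /x memJ_conjg.
have acj : forall c, commute c a -> a ^ c = a.
  by move=> c cc; rewrite conjgE -cc mulKg.
have nxc : forall c, commute c a -> a \notin D :^ (x * c).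
  by move=> c cc; rewrite conjsgM -(acj c cc) memJ_conjg.
set S := [set dcoset D (Hgrp l (ltnW hn)) y | y in G & #|dcoset D (Hgrp l (ltnW hn)) y| == (#|D| * #|Hgrp l (ltnW hn)|)%N].
have inS : forall y, y \in G -> a \notin D :^ y -> dcoset D (Hgrp l (ltnW hn)) y \in S.
  move=> y yG ny; apply/imsetP; exists y => //.
  by rewrite inE yG /= (dcoset_card hl oa ny).
have memd : forall c : {perm 'I_(l ^ n)}, dcoset D (Hgrp l (ltnW hn)) (x * c) = dcoset D (Hgrp l (ltnW hn)) x ->
    exists2 h, h \in <[a]> & (c * h^-1) ^ x^-1 \in D.
  move=> c e.
  have : x * c \in dcoset D (Hgrp l (ltnW hn)) (x * c).
    by rewrite /dcoset -[X in X \in _]mulg1; apply: mem_mulg; rewrite ?rcoset_refl ?group1.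
  rewrite e /dcoset => /mulsgP [w h /rcosetP [d dD ->] hH exc].
  exists h => //.
  by rewrite conjgE invgK !mulgA exc -(mulgA _ h) mulgV mulg1 mulgK.
set HH := Hgrp l (ltnW hn).
have [c [cG ca ne]] : exists c, [/\ c \in G, commute c a & dcoset D HH (x * c) != dcoset D HH x].
  case: (eqVneq (dcoset D HH (x * c1)) (dcoset D HH x)) => e1; last by exists c1.
  case: (eqVneq (dcoset D HH (x * c2)) (dcoset D HH x)) => e2; last by exists c2.
  case: (eqVneq (dcoset D HH (x * c3)) (dcoset D HH x)) => e3; last by exists c3.
  exfalso.
  have [h1 H1 D1] := memd _ e1.
  have [h2 H2 D2] := memd _ e2.
  have [h3 H3 D3] := memd _ e3.
  exact: (fam h1 h2 h3 x^-1).
rewrite /Ssplit; apply/card_gt1P.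
exists (dcoset D HH (x * c)), (dcoset D HH x); split => //.
- by apply: inS; rewrite ?groupM // nxc.
- exact: inS.
Qed.
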